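(* Let $F$ be a recurrent set and let $X\subset F$ be a bifix code of finite $F$-degree $d$. Then the set of nonempty proper suffixes of words of $X$ is a disjoint union of $d-1$ $F$-maximal prefix codes.
   Context: $A$ is a finite alphabet. $F\subset A^*$ is recurrent if it is nonempty, closed under factors, and for all $u,w\in F$ there is $v\in F$ with $uvw\in F$. A prefix code is a set of nonempty words none of which is a proper prefix of another; a bifix code is also suffix (no element a proper suffix of another). A prefix code $Y\subset F$ is $F$-maximal if it is not properly contained in any prefix code contained in $F$. A parse of $w$ with respect to $X$ is a triple $(v,x,u)$ with $w=vxu$, $v$ having no suffix in $X$, $x\in X^*$, $u$ having no prefix in $X$; $\delta_X(w)$ is their number and $d_F(X)=\max_{w\in F}\delta_X(w)$. *)

(* Defs.v *)
From mathcomp Require Import all_boot.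
Set Implicit Arguments. Unset Strict Implicit. Unset Printing Implicit Defensive.

Section Words.
Variable A : finType.
Implicit Types (F X Y : pred (seq A)) (u v w x : seq A).

Definition recurrent F : Prop :=
  [/\ exists w, F w,
      (forall u v w, F (u ++ v ++ w) -> F v)
    & (forall u w, F u -> F w -> exists v, F v /\ F (u ++ v ++ w))].

Definition prefix_code X : Prop :=
  (forall x, X x -> x != [::]) /\
  (forall x t, X x -> X (x ++ t) -> t != [::] -> False).

Definition suffix_code X : Prop :=
  (forall x, X x -> x != [::]) /\
  (forall x t, X x -> X (t ++ x) -> t != [::] -> False).

Definition bifix_code X : Prop := prefix_code X /\ suffix_code X.

Definition subset_of X F : Prop := forall x, X x -> F x.

Definition F_maximal_prefix_code F Y : Prop :=
  [/\ prefix_code Y, subset_of Y F &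
      forall Y', prefix_code Y' -> subset_of Y' F -> subset_of Y Y' -> Y' =i Y].

Fixpoint starb_aux X (n : nat) w : bool :=
  match n with
  | 0 => w == [::]
  | n'.+1 => (w == [::]) ||
      has (fun k => X (take k.+1 w) && starb_aux X n' (drop k.+1 w)) (iota 0 (size w))
  end.
Definition starb X w : bool := starb_aux X (size w) w.

Definition no_suffix_in X v : bool :=
  ~~ has (fun k => X (drop k v)) (iota 0 (size v).+1).
Definition no_prefix_in X u : bool :=
  ~~ has (fun k => X (take k u)) (iota 0 (size u).+1).

(* A parse (v, x, u) of w with w = v x u is determined by the cut points
   i = |v| <= j = |v x|. *)
Definition parseb X w (i j : nat) : bool :=
  [&& i <= j, j <= size w,
      no_suffix_in X (take i w),
      starb X (drop i (take j w)) &
      no_prefix_in X (drop j w)].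

Definition delta X w : nat :=
  #|[set ij : 'I_(size w).+1 * 'I_(size w).+1 | parseb X w ij.1 ij.2]|.

Definition F_degree F X (d : nat) : Prop :=
  (exists2 w, F w & delta X w = d) /\ (forall w, F w -> delta X w <= d).

Definition proper_suffixes X (s : seq A) : Prop :=
  s != [::] /\ exists x t, X x /\ t != [::] /\ x = t ++ s.

End Words.

(* Main.v *)
Require Import Defs.
From mathcomp Require Import all_boot.
From Stdlib Require Import ClassicalEpsilon.
Set Implicit Arguments. Unset Strict Implicit. Unset Printing Implicit Defensive.
Lemma card_pairs n (P : nat -> nat -> bool) :
  #|[set ij : 'I_n.+1 * 'I_n.+1 | P ij.1 ij.2]| =
  \sum_(i < n.+1) #|[set j : 'I_n.+1 | P i j]|.
Proof.
rewrite -sum1_card.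
rewrite (eq_bigl (fun p : 'I_n.+1 * 'I_n.+1 => true && P p.1 p.2)); last by move=> p; rewrite inE.
rewrite -(pair_big_dep xpredT (fun (i j : 'I_n.+1) => P i j) (fun _ _ => 1)).
apply: eq_bigr => i _; rewrite -sum1_card; apply: eq_bigl => j; by rewrite inE.
Qed.

Lemma card_pairs_r n (P : nat -> nat -> bool) :
  #|[set ij : 'I_n.+1 * 'I_n.+1 | P ij.1 ij.2]| =
  \sum_(j < n.+1) #|[set i : 'I_n.+1 | P i j]|.
Proof.
rewrite -sum1_card.
rewrite (eq_bigl (fun p : 'I_n.+1 * 'I_n.+1 => true && P p.1 p.2)); last by move=> p; rewrite inE.
rewrite -(pair_big_dep xpredT (fun (i j : 'I_n.+1) => P i j) (fun _ _ => 1)).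
under eq_bigr => i _ do rewrite big_mkcond.
rewrite exchange_big /=.
apply: eq_bigr => j _; rewrite -big_mkcond -sum1_card; apply: eq_bigl => i; by rewrite inE.
Qed.

Lemma card_unique n (R : nat -> bool) (b : bool) :
  (forall j j', j <= n -> j' <= n -> R j -> R j' -> j = j') ->
  (b <-> exists2 j, j <= n & R j) ->
  #|[set j : 'I_n.+1 | R j]| = b.
Proof.
move=> U E.
case: b E => E.
  have [j jn Rj] := (proj1 E isT).
  have -> : [set j : 'I_n.+1 | R j] = [set (Ordinal (jn : j < n.+1))].
    apply/setP => k; rewrite !inE; apply/idP/eqP.
      move=> Rk; apply: val_inj => /=; apply: U => //; by rewrite -ltnS.
    by move=> ->.
  by rewrite cards1.
have -> : [set j : 'I_n.+1 | R j] = set0.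
  apply/setP => k; rewrite !inE; apply/negbTE/negP => Rk.
  have : false by apply E; exists k => //; rewrite -ltnS.
  by [].
by rewrite cards0.
Qed.

Lemma sum_count n (Q : nat -> bool) :
  \sum_(i < n.+1) (Q i : nat) = count Q (iota 0 n.+1).
Proof.
rewrite -sum1_count big_mkcond /= -(big_mkord xpredT (fun i => (Q i : nat))).
rewrite /index_iota subn0.
rewrite [RHS]big_mkcond; apply: congr_big => // i _; by case: (Q i).
Qed.

Lemma catP (T : Type) (a b c d : seq T) : a ++ b = c ++ d ->
  (exists t, c = a ++ t /\ b = t ++ d) \/ (exists t, a = c ++ t /\ d = t ++ b).
Proof.
elim: a c => [|x a IH] [|y c] /=.
- by move=> ->; left; exists [::].
- by move=> ->; left; exists (y :: c).
- by move=> <-; right; exists (x :: a).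
- case=> -> /IH [[t [-> ->]]|[t [-> ->]]]; [left|right]; by exists t.
Qed.

Lemma npP (A : finType) (X : pred (seq A)) u :
  no_prefix_in X u <-> forall p q, u = p ++ q -> X p = false.
Proof.
split.
  move=> /hasPn H p q E; apply/negbTE; have := H (size p).
  rewrite E take_size_cat // mem_iota size_cat /= ltnS leq_addr; by apply.
move=> H; apply/hasPn => k _; apply/negbT; apply: (H _ (drop k u)).
by rewrite cat_take_drop.
Qed.

Lemma nsP (A : finType) (X : pred (seq A)) v :
  no_suffix_in X v <-> forall p q, v = p ++ q -> X q = false.
Proof.
split.
  move=> /hasPn H p q E; apply/negbTE; have := H (size p).
  rewrite E drop_size_cat // mem_iota size_cat /= ltnS leq_addr; by apply.
move=> H; apply/hasPn => k _; apply/negbT; apply: (H (take k v)).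
by rewrite cat_take_drop.
Qed.

Lemma starauxP (A : finType) (X : pred (seq A)) (Xnil : X [::] = false) n w :
  size w <= n ->
  (starb_aux X n w <-> exists ys, all X ys /\ flatten ys = w).
Proof.
elim: n w => [|n IH] w /=.
  rewrite leqn0 => /nilP ->; split=> // _; by exists [::].
move=> Hw; split.
  case/orP=> [/eqP ->|/hasP [k _ /andP [Xk Hd]]]; first by exists [::].
  have [|ys [Hys Hf]] := (proj1 (IH (drop k.+1 w) _) Hd).
    by rewrite size_drop leq_subLR (leq_trans Hw) // addSn ltnS leq_addl.
  exists (take k.+1 w :: ys); by rewrite /= Xk Hys Hf cat_take_drop.
case=> [[|y ys]] /= [Hys Hf]; first by rewrite -Hf.
case/andP: Hys => Xy Hys.
have yne : y != [::] by apply/eqP => E; move: Xy; rewrite E Xnil.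
apply/orP; right; apply/hasP; exists (size y).-1.
  rewrite mem_iota /= -Hf size_cat.
  by case: y yne {Xy Hf} => // a y _ /=; rewrite ltnS leq_addr.
have sy : (size y).-1.+1 = size y by case: y yne {Xy Hf}.
rewrite sy -Hf take_size_cat // drop_size_cat // Xy /=.
apply/(IH (flatten ys)); last by exists ys.
move: Hw; rewrite -Hf size_cat; case: y yne {Xy Hf sy} => //= a y _.
by rewrite ltnS => /(leq_trans _)-> //; rewrite leq_addl.
Qed.

Lemma starP (A : finType) (X : pred (seq A)) (Xnil : X [::] = false) w :
  starb X w <-> exists ys, all X ys /\ flatten ys = w.
Proof. exact: starauxP. Qed.

Lemma catlI (T : Type) (a b c : seq T) : a ++ b = a ++ c -> b = c.
Proof. by elim: a => //= x a IH [] /IH. Qed.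

Lemma catrI (T : Type) (a b c : seq T) : b ++ a = c ++ a -> b = c.
Proof.
move=> E; have Hs : size b = size c by move/(congr1 size): E; rewrite !size_cat => /eqP; rewrite eqn_add2r => /eqP.
by rewrite -(take_size_cat a Hs) E take_size_cat.
Qed.

Lemma pc_eq (A : finType) (X : pred (seq A)) y t :
  prefix_code X -> X y -> X (y ++ t) -> t = [::].
Proof. by case: t => // a t [_ H] Xy Xyt; case: (H _ _ Xy Xyt). Qed.

Lemma sc_eq (A : finType) (X : pred (seq A)) y t :
  suffix_code X -> X y -> X (t ++ y) -> t = [::].
Proof. by case: t => // a t [_ H] Xy Xyt; case: (H _ _ Xy Xyt). Qed.

Lemma uniq_pref (A : finType) (X : pred (seq A)) : prefix_code X ->
  forall ys ys' u u', all X ys -> all X ys' -> no_prefix_in X u -> no_prefix_in X u' ->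
  flatten ys ++ u = flatten ys' ++ u' -> flatten ys = flatten ys'.
Proof.
move=> pc; elim=> [|y ys IH] [|y' ys'] u u' //= H H' /npP nu /npP nu'.
- move=> E; move: H' => /andP [Xy _]; have := nu y' (flatten ys' ++ u'); by rewrite Xy E catA => /(_ erefl).
- move=> E; move: H => /andP [Xy _]; have := nu' y (flatten ys ++ u); by rewrite Xy -E catA => /(_ erefl).
move: H H' => /andP [Xy H] /andP [Xy' H'].
rewrite -!catA => /catP [[t [Et E]]|[t [Et E]]].
- rewrite Et in Xy'; have t0 := pc_eq pc Xy Xy'; rewrite t0 cats0 in Et; subst y'.
  rewrite t0 /= in E; congr (_ ++ _); apply: (IH _ u u') => //; by apply/npP.
- rewrite Et in Xy; have t0 := pc_eq pc Xy' Xy; rewrite t0 cats0 in Et; subst y.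
  rewrite t0 /= in E; congr (_ ++ _); apply: (IH _ u u') => //; by apply/npP.
Qed.

Lemma uniq_suf (A : finType) (X : pred (seq A)) : suffix_code X ->
  forall ys ys' v v', all X ys -> all X ys' -> no_suffix_in X v -> no_suffix_in X v' ->
  v ++ flatten ys = v' ++ flatten ys' -> flatten ys = flatten ys'.
Proof.
move=> sc ys; elim/last_ind: ys => [|ys y IH] ys'; case/lastP: ys' => [|ys' y'] v v' //=;
  rewrite ?flatten_rcons ?all_rcons => H H' /nsP nv /nsP nv'.
- rewrite cats0 => E; move: H' => /andP [Xy _]; have := nv (v' ++ flatten ys') y'; by rewrite Xy E catA => /(_ erefl).
- rewrite cats0 => E; move: H => /andP [Xy _]; have := nv' (v ++ flatten ys) y; by rewrite Xy -E catA => /(_ erefl).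
move: H H' => /andP [Xy H] /andP [Xy' H'].
rewrite !catA => /catP [[t [E Et]]|[t [E Et]]].
- rewrite Et in Xy; have t0 := sc_eq sc Xy' Xy; rewrite t0 /= in Et; subst y'.
  rewrite t0 cats0 in E; congr (_ ++ _); apply: (IH _ v v') => //; by apply/nsP.
- rewrite Et in Xy'; have t0 := sc_eq sc Xy Xy'; rewrite t0 /= in Et; subst y.
  rewrite t0 cats0 in E; congr (_ ++ _); apply: (IH _ v v') => //; by apply/nsP.
Qed.

Lemma ex_pref (A : finType) (X : pred (seq A)) (Xnil : X [::] = false) y :
  exists ys u, [/\ all X ys, no_prefix_in X u & y = flatten ys ++ u].
Proof.
move: {2}(size y) (leqnn (size y)) => n; elim: n y => [|n IH] y Hy.
  move: Hy; rewrite leqn0 => /nilP ->; exists [::], [::]; split=> //.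
  by apply/npP => [[|a p]] [|b q] //; rewrite Xnil.
case: (boolP (no_prefix_in X y)) => Hn; first by exists [::], y.
move: Hn => /negbNE /hasP [k _ Xk].
have kp : 0 < k by case: k Xk => //; rewrite take0 Xnil.
have [|ys [u [H1 H2 H3]]] := IH (drop k y).
  rewrite size_drop leq_subLR (leq_trans Hy) //; case: k kp {Xk} => // k _; by rewrite addSn ltnS leq_addl.
exists (take k y :: ys), u; split=> //=; first by rewrite Xk.
by rewrite -catA -H3 cat_take_drop.
Qed.

Lemma ex_suf (A : finType) (X : pred (seq A)) (Xnil : X [::] = false) y :
  exists ys v, [/\ all X ys, no_suffix_in X v & y = v ++ flatten ys].
Proof.
move: {2}(size y) (leqnn (size y)) => n; elim: n y => [|n IH] y Hy.
  move: Hy; rewrite leqn0 => /nilP ->; exists [::], [::]; split=> //.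
  by apply/nsP => [[|a p]] [|b q] //; rewrite Xnil.
case: (boolP (no_suffix_in X y)) => Hn; first by exists [::], y; rewrite cats0.
move: Hn => /negbNE /hasP [k]; rewrite mem_iota /= ltnS => ky Xk.
have kp : k < size y.
  rewrite ltn_neqAle ky andbT; apply/eqP => E; move: Xk; by rewrite E drop_size Xnil.
have [|ys [v [H1 H2 H3]]] := IH (take k y).
  rewrite size_take kp -ltnS (leq_trans kp) //.
exists (rcons ys (drop k y)), v; split=> //=; first by rewrite all_rcons Xk.
by rewrite flatten_rcons catA -H3 cat_take_drop.
Qed.

Definition cntP (A : finType) (X : pred (seq A)) w :=
  count (fun i => no_suffix_in X (take i w)) (iota 0 (size w).+1).
Definition cntS (A : finType) (X : pred (seq A)) w :=
  count (fun j => no_prefix_in X (drop j w)) (iota 0 (size w).+1).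

Lemma core_pref (A : finType) (X : pred (seq A)) (pc : prefix_code X) y m m' :
  m <= size y -> m' <= size y ->
  starb X (take m y) -> no_prefix_in X (drop m y) ->
  starb X (take m' y) -> no_prefix_in X (drop m' y) -> m = m'.
Proof.
have Xnil : X [::] = false by apply/negbTE/negP => /pc.1.
move=> hm hm' /(starP Xnil) [ys [H1 E1]] n1 /(starP Xnil) [ys' [H1' E1']] n1'.
have := uniq_pref pc H1 H1' n1 n1'.
rewrite E1 E1' !cat_take_drop => /(_ erefl) /(congr1 size).
by rewrite !size_takel.
Qed.

Lemma core_suf (A : finType) (X : pred (seq A)) (sc : suffix_code X) y m m' :
  m <= size y -> m' <= size y ->
  no_suffix_in X (take m y) -> starb X (drop m y) ->
  no_suffix_in X (take m' y) -> starb X (drop m' y) -> m = m'.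
Proof.
have Xnil : X [::] = false by apply/negbTE/negP => /sc.1.
move=> hm hm' n1 /(starP Xnil) [ys [H1 E1]] n1' /(starP Xnil) [ys' [H1' E1']].
have := uniq_suf sc H1 H1' n1 n1'.
rewrite E1 E1' !cat_take_drop => /(_ erefl) /(congr1 size).
rewrite !size_drop => E.
by rewrite -(subKn hm) -(subKn hm') E.
Qed.

Lemma delta_cntP (A : finType) (X : pred (seq A)) (pc : prefix_code X) w :
  delta X w = cntP X w.
Proof.
have Xnil : X [::] = false by apply/negbTE/negP => /pc.1.
rewrite /delta /cntP card_pairs -sum_count; apply: eq_bigr => i _.
have hi : i <= size w by rewrite -ltnS ltn_ord.
move: hi; move: (nat_of_ord i) => {}i hi.
apply: card_unique.
- move=> j j' hj hj' /and5P [ij _ _ s1 n1] /and5P [ij' _ _ s1' n1'].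
  have E : forall k, i <= k -> take (k - i) (drop i w) = drop i (take k w) /\
      drop (k - i) (drop i w) = drop k w.
    by move=> k ik; rewrite take_drop drop_drop subnK.
  have [E1 E2] := E j ij; have [E1' E2'] := E j' ij'.
  have : j - i = j' - i.
    apply: (core_pref pc (y := drop i w)); rewrite ?size_drop ?leq_sub2r ?E1 ?E2 ?E1' ?E2' //.
  by move/(congr1 (addn^~ i)); rewrite !subnK.
- split; last by case=> j _ /and5P [].
  move=> ns; have [ys [u [H1 H2 H3]]] := ex_pref Xnil (drop i w).
  have E : size (flatten ys) + i <= size w.
    have := congr1 size H3; rewrite size_drop size_cat => E.
    by rewrite -(subnK hi) E leq_add2r leq_addr.
  exists (size (flatten ys) + i) => //.
  apply/and5P; split=> //; first by rewrite leq_addl.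
    rewrite -take_drop H3 take_size_cat //; apply/(starP Xnil); by exists ys.
  by rewrite -drop_drop H3 drop_size_cat.
Qed.

Lemma delta_cntS (A : finType) (X : pred (seq A)) (sc : suffix_code X) w :
  delta X w = cntS X w.
Proof.
have Xnil : X [::] = false by apply/negbTE/negP => /sc.1.
rewrite /delta /cntS card_pairs_r -sum_count; apply: eq_bigr => j _.
have hj : j <= size w by rewrite -ltnS ltn_ord.
move: hj; move: (nat_of_ord j) => {}j hj.
apply: (card_unique (R := fun i => parseb X w i j)).
- move=> i i' hi hi' /and5P [ij _ n1 s1 _] /and5P [ij' _ n1' s1' _].
  apply: (core_suf sc (y := take j w)); rewrite ?size_takel ?take_takel //.
- split; last by case=> i _ /and5P [].
  move=> np; have [ys [v [H1 H2 H3]]] := ex_suf Xnil (take j w).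
  have E : size v <= j.
    by have := congr1 size H3; rewrite size_takel // size_cat => ->; rewrite leq_addr.
  exists (size v) => //; first by apply: (leq_trans E).
  apply/and5P; split=> //.
    by rewrite -(take_takel _ E) H3 take_size_cat.
  rewrite H3 drop_size_cat //; apply/(starP Xnil); by exists ys.
Qed.

Lemma cntP_cat (A : finType) (X : pred (seq A)) p q :
  cntP X (p ++ q) = cntP X p +
    count (fun i => no_suffix_in X (take i (p ++ q))) (iota (size p).+1 (size q)).
Proof.
rewrite /cntP size_cat -addSn iotaD count_cat add0n; congr (_ + _).
apply: eq_in_count => i; rewrite mem_iota /= ltnS => hi; by rewrite takel_cat.
Qed.

Lemma cntP_mono (A : finType) (X : pred (seq A)) p q : cntP X p <= cntP X (p ++ q).
Proof. by rewrite cntP_cat leq_addr. Qed.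

Lemma cntP_rcons (A : finType) (X : pred (seq A)) p a :
  cntP X (rcons p a) = cntP X p + no_suffix_in X (rcons p a).
Proof.
by rewrite -cats1 cntP_cat /= take_oversize ?addn0 // size_cat /= addn1.
Qed.

Lemma cntP_ge (A : finType) (X : pred (seq A)) p q : q != [::] ->
  cntP X p + no_suffix_in X (p ++ q) <= cntP X (p ++ q).
Proof.
case/lastP: q => // q a _; rewrite -rcons_cat cntP_rcons leq_add2r; exact: cntP_mono.
Qed.

Lemma cntP_nil (A : finType) (X : pred (seq A)) : X [::] = false -> cntP X [::] = 1.
Proof. by move=> Xn; rewrite /cntP /= /no_suffix_in /= Xn. Qed.

Lemma cntS_mono (A : finType) (X : pred (seq A)) u z : cntS X z <= cntS X (u ++ z).
Proof.
rewrite /cntS size_cat -addnS iotaD count_cat add0n.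
rewrite [iota (size u) _](_ : _ = map (addn (size u)) (iota 0 (size z).+1)); last by rewrite -iotaDl addn0.
rewrite count_map -[X in X <= _]add0n leq_add // leq_eqVlt; apply/orP; left; apply/eqP.
apply: eq_count => j /=; by rewrite addnC -drop_drop drop_size_cat.
Qed.

Lemma ivt (A : finType) (X : pred (seq A)) (Xnil : X [::] = false) U k :
  2 <= k <= cntP X U -> exists p q, [/\ U = p ++ q, cntP X p = k & no_suffix_in X p].
Proof.
elim/last_ind: U => [|U a IH]; first by rewrite cntP_nil // => /andP [k2 /(leq_trans k2)].
case/andP=> k2; rewrite cntP_rcons => kl.
case: (leqP k (cntP X U)) => hk.
  have [p [q [E1 E2 E3]]] := IH (introT andP (conj k2 hk)).
  by exists p, (rcons q a); rewrite E1 rcons_cat.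
case: (boolP (no_suffix_in X (rcons U a))) => hn.
  move: kl; rewrite hn addn1 => kl.
  exists (rcons U a); exists [::]; rewrite cats0 cntP_rcons hn addn1; split=> //.
  by apply/eqP; rewrite eqn_leq kl hk.
move: kl; rewrite (negbTE hn) addn0 => kl.
by move: (leq_trans hk kl); rewrite ltnn.
Qed.

Lemma S_ns (A : finType) (X : pred (seq A)) (sc : suffix_code X) t s :
  X (t ++ s) -> t != [::] -> no_suffix_in X s.
Proof.
move=> Xts tn; apply/nsP => a y E; apply/negbTE/negP => Xy.
apply: (sc.2 y (t ++ a)) => //; first by rewrite -catA -E.
by case: t Xts tn.
Qed.

Lemma key (A : finType) (F X : pred (seq A)) (d : nat) :
  recurrent F -> subset_of X F -> bifix_code X -> F_degree F X d ->
  forall w k, F w -> 2 <= k <= d ->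
  exists s, [/\ proper_suffixes X s, cntP X s = k &
                (exists t, w = s ++ t) \/ (exists t, s = w ++ t)].
Proof.
move=> [_ fact ext] sub [pc sc] [[z Fz dz] hd] w k Fw /andP [k2 kd].
have Xnil : X [::] = false by apply/negbTE/negP => /pc.1.
have bound : forall u, F u -> cntP X u <= d by move=> u Fu; rewrite -delta_cntP // hd.
have cz : cntP X z = d by rewrite -delta_cntP.
have [v [_ FU]] := ext w z Fw Fz.
have cU : k <= cntP X (w ++ v ++ z).
  rewrite -delta_cntP // delta_cntS // catA (leq_trans kd) //.
  by apply: leq_trans (cntS_mono X (w ++ v) z); rewrite -(delta_cntS sc) dz.
have [p [q [Ep cp np]]] := ivt Xnil (introT andP (conj k2 cU)).
have [v' [_ FR]] := ext z _ Fz FU.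
have pn : p != [::] by apply/eqP => p0; move: cp; rewrite p0 cntP_nil // => k1; move: k2; rewrite -k1.
have ge := cntP_ge X (z ++ v') pn.
have c1 : d <= cntP X (z ++ v') by rewrite -cz cntP_mono.
have c2 : cntP X ((z ++ v') ++ p) <= d.
  apply: leq_trans (bound _ FR); rewrite Ep !catA; exact: cntP_mono.
have nsf : no_suffix_in X ((z ++ v') ++ p) = false.
  apply/negbTE/negP => hn; move: ge; rewrite hn addn1 => ge.
  by move: (leq_ltn_trans c1 (leq_trans ge c2)); rewrite ltnn.
move: nsf => /negbFE /hasP [j _ Xj].
have E : take j ((z ++ v') ++ p) ++ drop j ((z ++ v') ++ p) = (z ++ v') ++ p by rewrite cat_take_drop.
case/catP: E => [[t [E1 E2]]|[t [E1 E2]]]; last first.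
  by move/nsP: np => /(_ t _ E2); rewrite Xj.
have tn : t != [::].
  apply/eqP => t0; move: E2; rewrite t0 /= => E2; move/nsP: np => /(_ [::] p erefl).
  by rewrite -E2 Xj.
exists p; split=> //.
  split=> //; exists (drop j ((z ++ v') ++ p)); exists t; split=> //; exact: E2.
move: Ep => /catP [[t' [-> _]]|[t' [-> _]]]; [right|left]; by exists t'.
Qed.

Definition pb (P : Prop) : bool := if excluded_middle_informative P then true else false.
Lemma pbP (P : Prop) : pb P <-> P.
Proof. by rewrite /pb; case: excluded_middle_informative. Qed.

Theorem mainTheorem5 (A : finType) (F X : pred (seq A)) (d : nat) :
  recurrent F -> subset_of X F -> bifix_code X -> F_degree F X d ->
  exists P : 'I_(d - 1) -> pred (seq A),
    [/\ forall i, F_maximal_prefix_code F (P i),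
        forall i j s, i != j -> P i s -> P j s -> False &
        forall s, proper_suffixes X s <-> exists i, P i s].
Proof.
move=> rec sub bc hd.
have [pc sc] := bc.
have Xnil : X [::] = false by apply/negbTE/negP => /pc.1.
have bound : forall u, F u -> cntP X u <= d by move=> u Fu; rewrite -delta_cntP // hd.2.
have fact := let: And3 _ f _ := rec in f.
have SF : forall s, proper_suffixes X s -> F s.
  move=> s [_ [x [t [Xx [_ E]]]]]; apply: (fact t s [::]); rewrite cats0 -E; exact: sub.
exists (fun i s => pb (proper_suffixes X s) && (cntP X s == (nat_of_ord i).+2)); split.
- move=> i.
  have id2 : 2 <= i.+2 <= d.
    case: d {hd bound} i => [|d] i; first by case: i.
    by move: (ltn_ord i); move: (nat_of_ord i) => k; rewrite subn1 /=.
  have pci : prefix_code (fun s => pb (proper_suffixes X s) && (cntP X s == i.+2)).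
    split; first by move=> x /andP [/pbP [xn _] _].
    move=> x t /andP [_ /eqP cx] /andP [/pbP [_ [x0 [t0 [Xx0 [t0n E]]]]] /eqP cxt] tn.
    have hn : no_suffix_in X (x ++ t) by apply: (S_ns sc _ t0n); rewrite -E.
    move: (cntP_ge X x tn); rewrite hn cx cxt addn1; by rewrite ltnn.
  split=> //; first by move=> s /andP [/pbP /SF].
  move=> Y' pcY subY sPY y; apply/idP/idP; last exact: sPY.
  move=> Yy.
  have [s [ps cs cmp]] := key rec sub bc hd (subY y Yy) id2.
  have Ps : pb (proper_suffixes X s) && (cntP X s == i.+2) by rewrite cs eqxx andbT; apply/pbP.
  have Ys := sPY s Ps.
  suff -> : y = s by [].
  case: cmp => [[t Et]|[t Et]].
    case: t Et => [|a t] Et; first by rewrite Et cats0.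
    by case: (pcY.2 s (a :: t) Ys); rewrite -?Et.
  case: t Et => [|a t] Et; first by rewrite Et cats0.
  by case: (pcY.2 y (a :: t) Yy); rewrite -?Et.
- move=> i j s ij /andP [_ /eqP ci] /andP [_ /eqP cj].
  move/eqP: ij; apply; apply: val_inj => /=.
  by move: ci; rewrite cj => [[]].
- move=> s; split; last by case=> i /andP [/pbP].
  move=> ps; have Fs := SF s ps.
  have [sn [x [t [Xx [tn E]]]]] := ps.
  have c2 : 2 <= cntP X s.
    have := cntP_ge X [::] sn; rewrite cntP_nil //= (S_ns sc _ tn) // -?E //.
  have cd := bound s Fs.
  have hi : (cntP X s).-2 < d - 1.
    move: c2 cd; case: (cntP X s) => [|[|c]] //= _; case: d {hd bound} => // d.
    by rewrite subn1.
  exists (Ordinal hi); rewrite /=; apply/andP; split; first by apply/pbP.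
  by move: c2; case: (cntP X s) => [|[|c]].
Qed.
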